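(* Let $1/n\ll\gamma\ll\tau\ll\alpha\ll 1$, let $k\in\mathbb{N}$, and let $G$ be a $d$-regular digraph on $n$ vertices with $d\geq\alpha n$. Suppose $\mathcal{P}_k=\{V_{ij}:i,j\in[k]\}$ is an extremal $(k^2,\tau,\gamma)$-partition of $G$. Then for all $i,j\in[k]$ and every $w\in V_{ij}$ we have $d^+_{V_{*i'}}(w)\leq d^+_{V_{*i}}(w)$ and $d^-_{V_{j'*}}(w)\leq d^-_{V_{j*}}(w)$ for all $i',j'\in[k]$. In particular, $d^-_{V_{j'*}}(w),\,d^+_{V_{*i'}}(w)\leq d/2$ for all $i'\neq i$ and $j'\neq j$, and $d^+_{\mathcal{G}_k(\mathcal{P}_k,G)}(v),\,d^-_{\mathcal{G}_k(\mathcal{P}_k,G)}(v)\geq d/k$ for all $v\in V(G)$.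
   Context: Hierarchy convention: $x\ll y$ means $x\leq f(y)$ for some implicitly given non-decreasing function $f:(0,1]\to(0,1]$; the statement asserts such functions exist, constants chosen from right to left. $d$-regular: all in- and outdegrees equal $d$. For $S\subseteq V(G)$, $d^+_S(v)=|N^+(v)\cap S|$ and $d^-_S(v)=|N^-(v)\cap S|$. A $k^2$-partition of $V(G)$ is a family $\{V_{ij}:i,j\in[k]\}$ of pairwise disjoint (possibly empty) sets with union $V(G)$; $V_{i*}=\bigcup_j V_{ij}$, $V_{*j}=\bigcup_i V_{ij}$. $E(A,B)$ is the set of edges $ab$ with $a\in A,b\in B$. Good edges: $\mathcal{G}_k(\mathcal{P}_k,G)=\bigcup_i E(V_{i*},V_{*i})$; bad edges: $\mathcal{B}_k(\mathcal{P}_k,G)=\bigcup_{i\neq j}E(V_{i*},V_{*j})$. $d^{\pm}_{\mathcal{G}_k(\mathcal{P}_k,G)}(v)$ denotes the out/indegree of $v$ in the spanning subdigraph with edge set $\mathcal{G}_k(\mathcal{P}_k,G)$. A $(k^2,\tau,\gamma)$-partition of an $n$-vertex digraph is a $k^2$-partition with $|\mathcal{B}_k(\mathcal{P}_k,G)|\leq\gamma n^2$ and $|V_{i*}|,|V_{*j}|\geq\tau n$ for all $i,j$. It is extremal if $|\mathcal{B}_k(\mathcal{P}_k,G)|\leq|\mathcal{B}_k(\mathcal{P}'_k,G)|$ for every $(k^2,\tau,\gamma)$-partition $\mathcal{P}'_k$ of $V(G)$. *)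

(* Defs.v *)
From HB Require Import structures.
From mathcomp Require Import all_boot all_order all_algebra.
Set Implicit Arguments. Unset Strict Implicit. Unset Printing Implicit Defensive.
Import Order.TTheory GRing.Theory Num.Theory.

Definition loopless (V : finType) (E : rel V) : Prop := forall v, ~~ E v v.

Definition outN (V : finType) (E : rel V) (v : V) : {set V} := [set u | E v u].
Definition inN (V : finType) (E : rel V) (v : V) : {set V} := [set u | E u v].

Definition doutS (V : finType) (E : rel V) (S : {set V}) (v : V) : nat :=
  #|outN E v :&: S|.
Definition dinS (V : finType) (E : rel V) (S : {set V}) (v : V) : nat :=
  #|inN E v :&: S|.

Definition regular (V : finType) (E : rel V) (d : nat) : Prop :=
  forall v, #|outN E v| = d /\ #|inN E v| = d.

Definition k2_partition (V : finType) (k : nat) (P : 'I_k -> 'I_k -> {set V}) : Prop :=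
  (forall i j i' j', (i, j) != (i', j') -> [disjoint P i j & P i' j']) /\
  (forall v : V, exists i j, v \in P i j).

Definition Vrow (V : finType) (k : nat) (P : 'I_k -> 'I_k -> {set V}) (i : 'I_k) : {set V} :=
  \bigcup_(j < k) P i j.
Definition Vcol (V : finType) (k : nat) (P : 'I_k -> 'I_k -> {set V}) (j : 'I_k) : {set V} :=
  \bigcup_(i < k) P i j.

Definition bad_edges (V : finType) (E : rel V) (k : nat) (P : 'I_k -> 'I_k -> {set V})
  : {set V * V} :=
  [set e | E e.1 e.2 && [exists i : 'I_k, exists j : 'I_k,
      [&& i != j, e.1 \in Vrow P i & e.2 \in Vcol P j]]].

Definition good_edges (V : finType) (E : rel V) (k : nat) (P : 'I_k -> 'I_k -> {set V})
  : {set V * V} :=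
  [set e | E e.1 e.2 && [exists i : 'I_k, (e.1 \in Vrow P i) && (e.2 \in Vcol P i)]].

Definition dout_good (V : finType) (E : rel V) (k : nat) (P : 'I_k -> 'I_k -> {set V}) (v : V) : nat :=
  #|[set u | (v, u) \in good_edges E P]|.
Definition din_good (V : finType) (E : rel V) (k : nat) (P : 'I_k -> 'I_k -> {set V}) (v : V) : nat :=
  #|[set u | (u, v) \in good_edges E P]|.

Local Open Scope ring_scope.

Definition ktg_partition (R : realFieldType) (V : finType) (E : rel V) (k : nat)
  (tau gamma : R) (P : 'I_k -> 'I_k -> {set V}) : Prop :=
  k2_partition P /\
  (#|bad_edges E P|%:R <= gamma * (#|V|%:R) ^+ 2) /\
  (forall i : 'I_k, tau * #|V|%:R <= #|Vrow P i|%:R /\ tau * #|V|%:R <= #|Vcol P i|%:R).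

Definition extremal_ktg (R : realFieldType) (V : finType) (E : rel V) (k : nat)
  (tau gamma : R) (P : 'I_k -> 'I_k -> {set V}) : Prop :=
  ktg_partition E tau gamma P /\
  (forall P' : 'I_k -> 'I_k -> {set V}, ktg_partition E tau gamma P' ->
     (#|bad_edges E P| <= #|bad_edges E P'|)%N).

(* admissible hierarchy function: non-decreasing (0,1] -> (0,1] *)
Definition hier_fun (R : realFieldType) (f : R -> R) : Prop :=
  (forall x, 0 < x <= 1 -> 0 < f x <= 1) /\
  (forall x y, 0 < x <= 1 -> 0 < y <= 1 -> x <= y -> f x <= f y).

(* Main.v *)
Require Import Defs.
From HB Require Import structures.
From mathcomp Require Import all_boot all_order all_algebra.
From mathcomp Require Import lra zify.
Import Order.TTheory GRing.Theory Num.Theory.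
Set Implicit Arguments. Unset Strict Implicit.
Section Comb.
Variables (V : finType) (E : rel V) (k : nat).

Lemma k2_uniq (P : 'I_k -> 'I_k -> {set V}) u a b a' b' :
  k2_partition P -> u \in P a b -> u \in P a' b' -> a = a' /\ b = b'.
Proof.
move=> [D _] h1 h2; case: (eqVneq (a, b) (a', b')) => [[-> ->]//|ne].
by rewrite (disjointFr (D _ _ _ _ ne) h1) in h2.
Qed.

Lemma row_uniq (P : 'I_k -> 'I_k -> {set V}) u a a' :
  k2_partition P -> u \in Vrow P a -> u \in Vrow P a' -> a = a'.
Proof.
move=> H /bigcupP[b _ h1] /bigcupP[b' _ h2]; by case: (k2_uniq H h1 h2).
Qed.

Lemma col_uniq (P : 'I_k -> 'I_k -> {set V}) u a a' :
  k2_partition P -> u \in Vcol P a -> u \in Vcol P a' -> a = a'.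
Proof.
move=> H /bigcupP[b _ h1] /bigcupP[b' _ h2]; by case: (k2_uniq H h1 h2).
Qed.

Lemma row_ex (P : 'I_k -> 'I_k -> {set V}) u :
  k2_partition P -> exists a, u \in Vrow P a.
Proof. by move=> [_ C]; case: (C u) => a [b h]; exists a; apply/bigcupP; exists b. Qed.

Lemma col_ex (P : 'I_k -> 'I_k -> {set V}) u :
  k2_partition P -> exists b, u \in Vcol P b.
Proof. by move=> [_ C]; case: (C u) => a [b h]; exists b; apply/bigcupP; exists a. Qed.

Lemma sum_cols (P : 'I_k -> 'I_k -> {set V}) (S : {set V}) :
  k2_partition P -> \sum_(a < k) #|S :&: Vcol P a| = #|S|.
Proof.
move=> H.
have e1 : forall a, #|S :&: Vcol P a| = \sum_(u in S) (u \in Vcol P a).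
  move=> a; rewrite -sum1_card big_mkcond /= [RHS]big_mkcond /=.
  by apply: eq_bigr => u _; rewrite inE; case: (u \in S); case: (u \in Vcol P a).
under eq_bigr => a _ do rewrite e1.
rewrite exchange_big /= -sum1_card; apply: eq_bigr => u _.
case: (col_ex u H) => a0 h0.
rewrite (bigD1 a0) //= h0 big1 ?addn0 // => a ne.
apply/eqP; rewrite eqb0; apply/negP => h; move/eqP: ne; apply; apply: (col_uniq H h h0).
Qed.

Lemma k2_sum_out (P : 'I_k -> 'I_k -> {set V}) v :
  k2_partition P -> \sum_(a < k) doutS E (Vcol P a) v = #|outN E v|.
Proof. exact: sum_cols. Qed.

Lemma bad_char (P : 'I_k -> 'I_k -> {set V}) x y r c :
  k2_partition P -> x \in Vrow P r -> y \in Vcol P c ->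
  ((x, y) \in bad_edges E P) = E x y && (r != c).
Proof.
move=> H hr hc; rewrite inE /=; case: (E x y) => //=.
apply/existsP/idP => [[i /existsP[j /and3P[ne h1 h2]]]|ne].
  by rewrite (row_uniq H hr h1) (col_uniq H hc h2).
by exists r; apply/existsP; exists c; rewrite ne hr hc.
Qed.

Definition mv (P : 'I_k -> 'I_k -> {set V}) (w : V) (a0 b0 : 'I_k) :=
  fun a b => [set u | if u == w then (a == a0) && (b == b0) else u \in P a b].

Lemma mv_k2 P w a0 b0 : k2_partition P -> k2_partition (mv P w a0 b0).
Proof.
move=> [D C]; split.
  move=> i j i' j' ne; rewrite disjoints_subset; apply/subsetP => u.
  rewrite !inE; case: eqP => _.
    move=> /andP[/eqP ei /eqP ej]; apply/negP => /andP[/eqP ei' /eqP ej'].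
    by rewrite ei ej ei' ej' eqxx in ne.
  by move=> h1; rewrite (disjointFr (D _ _ _ _ ne) h1).
move=> u; case: (eqVneq u w) => [->|ne].
  by exists a0, b0; rewrite inE eqxx !eqxx.
by case: (C u) => a [b h]; exists a, b; rewrite inE (negbTE ne).
Qed.

Lemma mv_row P w a0 b0 a u :
  (u \in Vrow (mv P w a0 b0) a) = if u == w then a == a0 else u \in Vrow P a.
Proof.
case: (eqVneq u w) => [->|ne].
  apply/bigcupP/idP => [[b _]|/eqP ->]; first by rewrite inE eqxx => /andP[].
  by exists b0 => //; rewrite inE !eqxx.
apply/bigcupP/bigcupP => [[b _]|[b _ h]].
  by rewrite inE (negbTE ne) => h; exists b.
by exists b => //; rewrite inE (negbTE ne).
Qed.

Lemma mv_col P w a0 b0 b u :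
  (u \in Vcol (mv P w a0 b0) b) = if u == w then b == b0 else u \in Vcol P b.
Proof.
case: (eqVneq u w) => [->|ne].
  apply/bigcupP/idP => [[a _]|/eqP ->]; first by rewrite inE eqxx => /andP[].
  by exists a0 => //; rewrite inE !eqxx.
apply/bigcupP/bigcupP => [[a _]|[a _ h]].
  by rewrite inE (negbTE ne) => h; exists a.
by exists a => //; rewrite inE (negbTE ne).
Qed.

Definition Fw (w : V) : {set V * V} := [set e | e.1 == w].

Lemma badF (Q : 'I_k -> 'I_k -> {set V}) w a :
  k2_partition Q -> w \in Vrow Q a ->
  #|bad_edges E Q :&: Fw w| + doutS E (Vcol Q a) w = #|outN E w|.
Proof.
move=> H hw.
have -> : bad_edges E Q :&: Fw w = [set (w, y) | y in outN E w :\: Vcol Q a].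
  apply/setP => [[x y]]; rewrite in_setI [in X in _ && X]inE /=.
  case: (eqVneq x w) => [->|ne]; last first.
    rewrite andbF; apply/esym/negP => /imsetP[y' _ [e _]].
    by rewrite e eqxx in ne.
  rewrite andbT; case: (col_ex y H) => c hc.
  rewrite (bad_char H hw hc).
  apply/idP/imsetP => [/andP[he ne]|[y' hy' [e]]].
    exists y => //; rewrite !inE he andbT; apply/negP => h.
    by move/eqP: ne; apply; apply: (col_uniq H h hc).
  move: hy'; rewrite -e !inE => /andP[ny ->] /=.
  by apply/negP => /eqP ac; rewrite ac hc in ny.
rewrite card_imset; last by move=> y1 y2 [].
by rewrite /doutS addnC cardsID.
Qed.

Lemma mv_col_same P w i j i' b u :
  k2_partition P -> w \in P i j -> (u \in Vcol (mv P w i' j) b) = (u \in Vcol P b).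
Proof.
move=> H hw; rewrite mv_col; case: (eqVneq u w) => [->|//].
have hc : w \in Vcol P j by apply/bigcupP; exists i.
apply/eqP/idP => [->//|h]; exact: (col_uniq H h hc).
Qed.

Lemma badNF P w i j i' :
  k2_partition P -> w \in P i j ->
  bad_edges E (mv P w i' j) :\: Fw w = bad_edges E P :\: Fw w.
Proof.
move=> H hw; have H' := mv_k2 w i' j H.
apply/setP => [[x y]]; rewrite !in_setD [in X in ~~ X && _]inE [in X in _ = ~~ X && _]inE /=.
case: (eqVneq x w) => [//|ne] /=.
case: (row_ex x H) => r hr; case: (col_ex y H) => c hc.
have hr' : x \in Vrow (mv P w i' j) r by rewrite mv_row (negbTE ne).
have hc' : y \in Vcol (mv P w i' j) c by rewrite (mv_col_same _ _ _ H hw).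
by rewrite (bad_char H hr hc) (bad_char H' hr' hc').
Qed.

Lemma count_in (C : {set V}) d :
  regular E d ->
  #|[set e : V * V | E e.1 e.2 && (e.2 \in C)]| = d * #|C|.
Proof.
move=> Hr.
have -> : #|[set e : V * V | E e.1 e.2 && (e.2 \in C)]| =
   \sum_(x : V) \sum_(y : V) ((E x y && (y \in C)) : nat).
  rewrite pair_big /= -sum1_card big_mkcond /=; apply: eq_bigr => [[x y]] _.
  by rewrite inE /=; case: (_ && _).
rewrite exchange_big /= mulnC -sum_nat_const [RHS]big_mkcond /=.
apply: eq_bigr => y _; case: (y \in C); last first.
  by rewrite big1 // => x _; rewrite andbF.
case: (Hr y) => _ <-; rewrite -sum1_card [RHS]big_mkcond /=.
by apply: eq_bigr => x _; rewrite inE andbT; case: (E x y).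
Qed.

Lemma size_count (P : 'I_k -> 'I_k -> {set V}) d a :
  k2_partition P -> regular E d ->
  (d * #|Vcol P a| <= #|Vrow P a| * #|Vcol P a| + #|bad_edges E P|)%N.
Proof.
move=> H Hr; rewrite -(count_in _ Hr) -cardsX.
apply: leq_trans (leq_card_setU _ _).1.
apply: subset_leq_card; apply/subsetP => [[x y]]; rewrite !inE /= => /andP[he hc].
case: (row_ex x H) => r hr.
case: (eqVneq r a) => [e|ne]; first by apply/orP; left; subst r; apply/andP.
apply/orP; right; rewrite he /=; apply/existsP; exists r; apply/existsP; exists a.
by rewrite ne hr hc.
Qed.

Lemma k2_tr (P : 'I_k -> 'I_k -> {set V}) :
  k2_partition P -> k2_partition (fun a b => P b a).
Proof.
move=> [D C]; split.
  move=> i j i' j' ne; apply: D; apply: contra ne => /eqP [-> ->] //.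
by move=> v; case: (C v) => a [b h]; exists b, a.
Qed.

Lemma bad_tr (P : 'I_k -> 'I_k -> {set V}) :
  #|bad_edges (fun x y => E y x) (fun a b => P b a)| = #|bad_edges E P|.
Proof.
rewrite -(card_preimset (bad_edges E P) (f := fun e : V * V => (e.2, e.1))); last first.
  by move=> [a b] [c d] [-> ->].
apply: eq_card => [[x y]]; rewrite !inE /=; case: (E y x) => //=.
apply/existsP/existsP => [[i /existsP[j /and3P[ne h1 h2]]]|[i /existsP[j /and3P[ne h1 h2]]]].
  by exists j; apply/existsP; exists i; rewrite eq_sym ne h1 h2.
by exists j; apply/existsP; exists i; rewrite eq_sym ne h1 h2.
Qed.

Lemma good_out (P : 'I_k -> 'I_k -> {set V}) v r :
  k2_partition P -> v \in Vrow P r -> dout_good E P v = doutS E (Vcol P r) v.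
Proof.
move=> H hr; apply: eq_card => u; rewrite !inE /=; case: (E v u) => //=.
apply/existsP/idP => [[a /andP[h1 h2]]|h]; first by rewrite (row_uniq H hr h1).
by exists r; rewrite hr h.
Qed.

Lemma good_in_tr (P : 'I_k -> 'I_k -> {set V}) v :
  din_good E P v = dout_good (fun x y => E y x) (fun a b => P b a) v.
Proof.
apply: eq_card => u; rewrite !inE /=; case: (E u v) => //=.
by apply/existsP/existsP => [[a /andP[h1 h2]]|[a /andP[h1 h2]]]; exists a; rewrite h1 h2.
Qed.

End Comb.

Section Ext.
Local Open Scope ring_scope.
Variables (R : realFieldType) (V : finType) (E : rel V) (k : nat) (tau gamma : R).

Lemma out_dom (P : 'I_k -> 'I_k -> {set V}) i j w i' :
  extremal_ktg E tau gamma P ->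
  (forall a, tau * #|V|%:R <= (#|Vrow P a| - 1)%N%:R) ->
  w \in P i j -> (doutS E (Vcol P i') w <= doutS E (Vcol P i) w)%N.
Proof.
move=> [[H [Hb Hs]] Hext] Hsl hw.
rewrite leqNgt; apply/negP => lt.
set P' := mv P w i' j.
have H' : k2_partition P' := mv_k2 w i' j H.
have hwr : w \in Vrow P i by apply/bigcupP; exists j.
have hwr' : w \in Vrow P' i' by rewrite mv_row eqxx.
have ecol : forall b, Vcol P' b = Vcol P b.
  by move=> b; apply/setP => u; rewrite (mv_col_same _ _ _ H hw).
have e1 := badF E H hwr; have e2 := badF E H' hwr'.
rewrite ecol in e2.
have c1 := cardsID (Fw w) (bad_edges E P).
have c2 := cardsID (Fw w) (bad_edges E P').
rewrite (badNF E i' H hw) in c2.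
have ltb : (#|bad_edges E P'| < #|bad_edges E P|)%N.
  rewrite -c1 -c2 ltn_add2r.
  by rewrite -(ltn_add2r (doutS E (Vcol P i') w)) e2 -e1 ltn_add2l.
have : ktg_partition E tau gamma P'.
  split=> //; split.
    apply: le_trans Hb; rewrite ler_nat; exact: ltnW.
  move=> a; rewrite ecol; split; last by case: (Hs a).
  apply: (le_trans (Hsl a)); rewrite ler_nat.
  apply: (leq_trans _ (subset_leq_card (_ : Vrow P a :\ w \subset Vrow P' a))).
    by rewrite (cardsD1 w (Vrow P a)); case: (w \in Vrow P a); rewrite ?subn0 ?leq_subr ?add1n ?subSS ?subn0.
  apply/subsetP => u; rewrite !inE mv_row => /andP[ne ->]; by rewrite (negbTE ne).
move/Hext; by rewrite leqNgt ltb.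
Qed.

Lemma ktg_tr (P : 'I_k -> 'I_k -> {set V}) :
  ktg_partition E tau gamma P ->
  ktg_partition (fun x y => E y x) tau gamma (fun a b => P b a).
Proof.
move=> [H [Hb Hs]]; split; first exact: k2_tr.
split; first by rewrite bad_tr.
by move=> a; case: (Hs a) => h1 h2; split.
Qed.

End Ext.

Lemma extremal_tr (R : realFieldType) (V : finType) (E : rel V) (k : nat) (tau gamma : R)
  (P : 'I_k -> 'I_k -> {set V}) :
  extremal_ktg E tau gamma P ->
  extremal_ktg (fun x y => E y x) tau gamma (fun a b => P b a).
Proof.
move=> [H Hext]; split; first exact: ktg_tr.
move=> P' HP'; rewrite bad_tr.
have e : #|bad_edges (fun x y => E y x) P'| = #|bad_edges E (fun a b => P' b a)|
  := bad_tr E (fun a b => P' b a).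
rewrite e; exact: (Hext _ (ktg_tr HP')).
Qed.

Local Open Scope ring_scope.

Lemma slack_real (R : realFieldType) (a t g N D C Rr B : R) :
  0 < a -> a <= 1 -> 0 < t -> t <= a / 2 -> g <= t ^+ 2 / 4 -> 8 <= g * N ->
  0 < N -> a * N <= D -> t * N <= C -> D * C <= Rr * C + B -> B <= g * N ^+ 2 ->
  t * N + 1 <= Rr.
Proof.
move=> a0 a1 t0 ta gt gN N0 aD tC DC Bg.
rewrite leNgt; apply/negP => lt.
have h1 : g <= a / 16.
  have e1 : t * t <= a * a / 4 by nra.
  have e2 : a * a <= a * 1 by apply: ler_wpM2l; lra.
  rewrite mulr1 in e2.
  have : t ^+ 2 <= a / 4 by rewrite expr2; nra.
  lra.
have h2 : 128 <= a * N by nra.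
have h3' : t * N <= a / 2 * N by apply: ler_wpM2r => //; lra.
have h3 : a * N / 4 <= D - Rr by lra.
have h4 : (D - Rr) * C <= g * N ^+ 2 by nra.
have h5 : (a * N / 4) * (t * N) <= (D - Rr) * C.
  apply: ler_pM => //; nra.
have h6 : g * N ^+ 2 <= t ^+ 2 / 4 * N ^+ 2 by apply: ler_wpM2r => //; nra.
have h7 : (t * N ^+ 2 / 4) * a <= (t * N ^+ 2 / 4) * t.
  rewrite !expr2 in h4 h5 h6 *; lra.
have h8 : a <= t.
  by rewrite -(ler_pM2l (_ : 0 < t * N ^+ 2 / 4)) //; rewrite expr2; nra.
lra.
Qed.

Lemma slack_nat (R : realFieldType) (alpha tau gamma : R) (n d r c b : nat) :
  0 < alpha -> alpha <= 1 -> 0 < tau -> tau <= alpha / 2 -> gamma <= tau ^+ 2 / 4 ->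
  n%:R^-1 <= gamma / 8 -> (0 < n)%N -> alpha * n%:R <= d%:R ->
  tau * n%:R <= c%:R -> (d * c <= r * c + b)%N -> b%:R <= gamma * n%:R ^+ 2 ->
  tau * n%:R <= (r - 1)%N%:R.
Proof.
move=> a0 a1 t0 ta gt ng n0 ad tc hdc hb.
have N0 : 0 < n%:R :> R by rewrite ltr0n.
have gN : 8 <= gamma * n%:R.
  have : n%:R^-1 * n%:R <= gamma / 8 * n%:R by apply: ler_wpM2r => //; lra.
  rewrite mulVf ?gt_eqF //; lra.
have hdc' : d%:R * c%:R <= r%:R * c%:R + b%:R :> R by rewrite -!natrM -natrD ler_nat.
have := slack_real a0 a1 t0 ta gt gN N0 ad tc hdc' hb.
case: r {hdc hdc'} => [|r]; first by move=> h; exfalso; nra.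
by rewrite subn1 /= -addn1 natrD; lra.
Qed.

Lemma core (R : realFieldType) (alpha tau gamma : R) (n d : nat) (V : finType) (E : rel V)
  (k : nat) (P : 'I_k -> 'I_k -> {set V}) :
  0 < alpha -> alpha <= 1 -> 0 < tau -> tau <= alpha / 2 -> gamma <= tau ^+ 2 / 4 ->
  n%:R^-1 <= gamma / 8 -> (0 < n)%N -> #|V| = n -> regular E d ->
  alpha * n%:R <= d%:R -> extremal_ktg E tau gamma P ->
  (forall i j w, w \in P i j ->
     (forall i', (doutS E (Vcol P i') w <= doutS E (Vcol P i) w)%N) /\
     (forall i', i' != i -> (doutS E (Vcol P i') w)%:R <= d%:R / 2 :> R)) /\
  (forall v, d%:R / k%:R <= (dout_good E P v)%:R :> R).
Proof.
move=> a0 a1 t0 ta gt ng n0 HV Hr ad Hext.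
have Hext' := Hext; move: Hext' => [[H [Hb Hs]] _].
have Hsl : forall a, tau * #|V|%:R <= (#|Vrow P a| - 1)%N%:R.
  move=> a; rewrite HV; apply: (slack_nat (c := #|Vcol P a|) (b := #|bad_edges E P|) a0 a1 t0 ta gt ng n0 ad).
  - by case: (Hs a) => _; rewrite HV.
  - exact: size_count.
  - by rewrite -HV.
have sumd : forall v, \sum_(a < k) doutS E (Vcol P a) v = d.
  by move=> v; rewrite k2_sum_out //; case: (Hr v).
have dom : forall i j w i', w \in P i j ->
    (doutS E (Vcol P i') w <= doutS E (Vcol P i) w)%N.
  by move=> i j w i' hw; apply: (out_dom _ Hext Hsl hw).
split.
  move=> i j w hw; split; first by move=> i'; exact: dom hw.
  move=> i' ne.
  have hle : (doutS E (Vcol P i') w * 2 <= d)%N.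
    rewrite -(sumd w) (bigD1 i) //= (bigD1 i') //=; have := dom _ _ _ i' hw.
    move: (\sum_(_ < k | _) _)%N => s; rewrite leq_eqVlt; lia.
  by rewrite ler_pdivlMr // -natrM ler_nat.
move=> v; case: (row_ex v H) => r /bigcupP[b _ hb].
have hr : v \in Vrow P r by apply/bigcupP; exists b.
rewrite (good_out E H hr).
have hk : (d <= k * doutS E (Vcol P r) v)%N.
  rewrite -(sumd v) -[k in (k * _)%N]card_ord -sum_nat_const.
  by apply: leq_sum => a _; apply: (dom _ _ _ a hb).
case: (posnP k) => [k0|kp].
  have -> : k%:R = 0 :> R by rewrite k0.
  by rewrite invr0 mulr0.
by rewrite ler_pdivrMr ?ltr0n // -natrM ler_nat mulnC.
Qed.

Lemma regular_tr (V : finType) (E : rel V) d :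
  regular E d -> regular (fun x y => E y x) d.
Proof. by move=> H v; case: (H v). Qed.

Theorem proposition3p10 (R : realFieldType) :
  exists (f0 : R -> R) (f1 : R -> R) (f2 : R -> R) (f3 : R -> R),
    [/\ hier_fun f0, hier_fun f1, hier_fun f2 & hier_fun f3] /\
  forall (alpha tau gamma : R) (n k d : nat) (V : finType) (E : rel V)
         (P : 'I_k -> 'I_k -> {set V}),
    0 < alpha <= 1 -> 0 < tau <= 1 -> 0 < gamma <= 1 -> (0 < n)%N ->
    alpha <= f0 1 -> tau <= f1 alpha -> gamma <= f2 tau -> n%:R^-1 <= f3 gamma ->
    #|V| = n -> loopless E -> regular E d -> alpha * n%:R <= d%:R ->
    extremal_ktg E tau gamma P ->
    (forall (i j : 'I_k) (w : V), w \in P i j ->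
       (forall i' : 'I_k, (doutS E (Vcol P i') w <= doutS E (Vcol P i) w)%N) /\
       (forall j' : 'I_k, (dinS E (Vrow P j') w <= dinS E (Vrow P j) w)%N) /\
       (forall i' : 'I_k, i' != i -> (doutS E (Vcol P i') w)%:R <= d%:R / 2 :> R) /\
       (forall j' : 'I_k, j' != j -> (dinS E (Vrow P j') w)%:R <= d%:R / 2 :> R)) /\
    (forall v : V, d%:R / k%:R <= (dout_good E P v)%:R :> R /\
                   d%:R / k%:R <= (din_good E P v)%:R :> R).
Proof.
exists (fun x => x), (fun x => x / 2), (fun x => x ^+ 2 / 4), (fun x => x / 8).
split.
  split.
  - by split=> [x|x y] //.
  - split=> [x /andP[h1 h2]|x y /andP[h1 h2] /andP[h3 h4] h]; first by apply/andP; split; lra.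
    lra.
  - split=> [x /andP[h1 h2]|x y /andP[h1 h2] /andP[h3 h4] h].
      by apply/andP; split; rewrite expr2; nra.
    by rewrite !expr2; nra.
  - split=> [x /andP[h1 h2]|x y /andP[h1 h2] /andP[h3 h4] h]; first by apply/andP; split; lra.
    lra.
move=> alpha tau gamma n k d V E P /andP[a0 a1] /andP[t0 t1] /andP[g0 g1] n0
  _ ta gt ng HV _ Hr ad Hext.
have [C1 C2] := core a0 a1 t0 ta gt ng n0 HV Hr ad Hext.
have [D1 D2] := core a0 a1 t0 ta gt ng n0 HV (regular_tr Hr) ad (extremal_tr Hext).
split.
  move=> i j w hw.
  have [h1 h2] := C1 i j w hw.
  have [h3 h4] := D1 j i w hw.
  by split; [exact: h1 | split; [exact: h3 | split; [exact: h2 | exact: h4]]].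
move=> v; split; first exact: C2.
rewrite good_in_tr; exact: D2.
Qed.
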